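(* Let $d\ge2$ and let $n_1\ge n_2\ge n_3\ge n_4\ge0$ be integers with $n_1+n_2+n_3+n_4=2d-4$. Then \[\int_{\mathrm{Gr}(2,d+1)}\sigma_{n_1}\sigma_{n_2}\sigma_{n_3}\sigma_{n_4}(8\sigma_{11}-2\sigma_1^2)=\begin{cases}6 & \text{if } n_1=n_2=n_3=n_4,\\ 4 & \text{if } n_1=n_2\neq n_3=n_4,\\ 2 & \text{if } n_1+n_4=n_2+n_3 \text{ and } n_1\neq n_2,\\ -2 & \text{if } n_1=n_2+n_3+n_4+2,\\ 0 & \text{otherwise.}\end{cases}\]
   Context: $\sigma_{a,b}$ denote the Schubert classes on $\mathrm{Gr}(2,d+1)$, $\sigma_a=\sigma_{a,0}$, with $\sigma_a=0$ for $a>d-1$. *)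

(* Defs.v *)
From HB Require Import structures.
From mathcomp Require Import all_boot all_order all_algebra.
Set Implicit Arguments. Unset Strict Implicit. Unset Printing Implicit Defensive.
Import Order.TTheory GRing.Theory Num.Theory.
Local Open Scope ring_scope.

(* A class in H^*(Gr(2,d+1)) : integer coefficients on Schubert classes
   sigma_{a,b}, d-1 >= a >= b >= 0, indexed by (a,b) : 'I_d * 'I_d
   (coefficients at pairs with b > a are irrelevant and are always 0 below). *)
Definition cls (d : nat) := {ffun 'I_d * 'I_d -> int}.

(* Schubert class sigma_{a,b}; it is 0 unless d-1 >= a >= b (so in particular
   sigma_a = 0 for a > d-1). *)
Definition sigma2 (d a b : nat) : cls d :=
  [ffun ab : 'I_d * 'I_d =>
     (((ab.1 : nat) == a) && ((ab.2 : nat) == b) && (b <= a)%N)%:Z].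

Definition sigma (d a : nat) : cls d := sigma2 d a 0.

(* Littlewood-Richardson coefficient c^{(a,b)}_{(a1,b1),(a2,b2)} for two-row
   partitions: sigma_{a1,b1} sigma_{a2,b2} = sum_{i=0}^{min(a1-b1,a2-b2)}
   sigma_{a1+a2-b2-i, b1+b2+i} (Pieri / Clebsch-Gordan). *)
Definition lrc (a1 b1 a2 b2 a b : nat) : int :=
  ([&& (b1 <= a1)%N, (b2 <= a2)%N, (a + b == a1 + b1 + (a2 + b2))%N,
       (b1 + b2 <= b)%N & (b - (b1 + b2) <= minn (a1 - b1) (a2 - b2))%N])%:Z.

(* cup product in H^*(Gr(2,d+1)): LR product, dropping the sigma_{a,b}
   with a > d-1 (which vanish on Gr(2,d+1)). *)
Definition cmul (d : nat) (f g : cls d) : cls d :=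
  [ffun ab : 'I_d * 'I_d =>
     \sum_(x : 'I_d * 'I_d) \sum_(y : 'I_d * 'I_d)
        f x * g y * lrc x.1 x.2 y.1 y.2 ab.1 ab.2].

Definition csub (d : nat) (f g : cls d) : cls d := [ffun ab => f ab - g ab].
Definition cscale (d : nat) (k : int) (f : cls d) : cls d := [ffun ab => k * f ab].

(* integral over Gr(2,d+1): coefficient of the point class sigma_{d-1,d-1} *)
Definition cint (d : nat) (f : cls d) : int :=
  \sum_(x : 'I_d * 'I_d)
     f x * (((x.1 : nat) == d.-1) && ((x.2 : nat) == d.-1))%:Z.

(* Main.v *)
Require Import Defs.
From HB Require Import structures.
From mathcomp Require Import all_boot all_order all_algebra.
From mathcomp Require Import zify ring.
Import Order.TTheory GRing.Theory Num.Theory.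
Local Open Scope ring_scope.

Definition cl d (g : nat -> nat -> int) : cls d := [ffun ab : 'I_d * 'I_d => g ab.1 ab.2].

Lemma bZ (a b : bool) : (a && b)%:Z = a%:Z * b%:Z :> int.
Proof. by case: a; case: b. Qed.

Lemma sum_pairN d (G : nat -> nat -> int) :
  \sum_(x : 'I_d * 'I_d) G x.1 x.2 = \sum_(0 <= i < d) \sum_(0 <= j < d) G i j.
Proof.
rewrite -(pair_big xpredT xpredT (fun (i j : 'I_d) => G i j)) /= big_mkord.
by apply: eq_bigr => i _; rewrite big_mkord.
Qed.

Lemma delta1 d p (f : nat -> int) :
  \sum_(0 <= i < d) ((i == p)%:Z * f i) = (p < d)%N%:Z * f p.
Proof.
rewrite big_mkord.
case: (ltnP p d) => h.
  rewrite (bigD1 (Ordinal h)) //= eqxx mul1r big1 ?addr0 // => i hi.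
  have -> : ((i : nat) == p) = false.
    apply/negbTE; apply: contra hi => /eqP e; apply/eqP/val_inj => //.
  by rewrite mul0r.
rewrite mul0r big1 // => i _.
have -> : ((i : nat) == p) = false by apply/negbTE; have := ltn_ord i; lia.
by rewrite mul0r.
Qed.

Lemma delta2 d p q (F : nat -> nat -> int) :
  \sum_(0 <= i < d) \sum_(0 <= j < d) (((i == p) && (j == q))%:Z * F i j)
  = ((p < d)%N && (q < d)%N)%:Z * F p q.
Proof.
under eq_bigr => i _ do under eq_bigr => j _ do rewrite bZ -mulrA.
under eq_bigr => i _ do rewrite -big_distrr /=.
by rewrite delta1 delta1 bZ mulrA.
Qed.

Lemma cl_mul d g h : cmul (cl d g) (cl d h) =
  cl d (fun a b => \sum_(0 <= x1 < d) \sum_(0 <= x2 < d) (g x1 x2 *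
     \sum_(0 <= y1 < d) \sum_(0 <= y2 < d) (h y1 y2 * lrc x1 x2 y1 y2 a b))).
Proof.
apply/ffunP => -[a b]; rewrite !ffunE /=.
under eq_bigr => x _ do under eq_bigr => y _ do rewrite !ffunE -mulrA.
under eq_bigr => x _ do rewrite -big_distrr /=
   (sum_pairN d (fun y1 y2 => h y1 y2 * lrc x.1 x.2 y1 y2 a b)).
by rewrite (sum_pairN d (fun x1 x2 => g x1 x2 * \sum_(0 <= y1 < d) \sum_(0 <= y2 < d) (h y1 y2 * lrc x1 x2 y1 y2 a b))).
Qed.

Lemma sig_cl d a b : sigma2 d a b = cl d (fun i j => ((i == a) && (j == b) && (b <= a)%N)%:Z).
Proof. by apply/ffunP => -[i j]; rewrite !ffunE. Qed.

Lemma cint_cl d g : (0 < d)%N -> cint (cl d g) = g d.-1 d.-1.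
Proof.
move=> hd; rewrite /cint.
under eq_bigr => x _ do rewrite ffunE mulrC.
rewrite (sum_pairN d (fun i j => ((i == d.-1) && (j == d.-1))%:Z * g i j)) delta2.
by rewrite (_ : d.-1 < d)%N ?mul1r //; lia.
Qed.

Ltac bcrush := repeat match goal with |- context [nat_of_bool ?b] =>
   lazymatch b with true => fail | false => fail | _ => case: (boolP b) => ? end end;
   rewrite /=; try lia.

Lemma ssE d n1 n2 : (n2 <= n1)%N -> (n1 < d)%N ->
  cmul (sigma d n1) (sigma d n2) = cl d (fun a b => ((a == (n1 + n2 - b)%N) && (b <= n2)%N)%:Z).
Proof.
move=> h21 h1; rewrite /sigma !sig_cl cl_mul; apply/ffunP => -[a b]; rewrite !ffunE /=.
under eq_bigr => ? _ do under eq_bigr => ? _ do rewrite leq0n andbT.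
rewrite delta2.
under eq_bigr => ? _ do under eq_bigr => ? _ do rewrite leq0n andbT.
rewrite delta2 /lrc !mulrA -!bZ; congr (Posz (nat_of_bool _)).
apply/idP/idP => H; lia.
Qed.

Lemma TE d : (2 <= d)%N ->
  csub (cscale 8 (sigma2 d 1 1)) (cscale 2 (cmul (sigma d 1) (sigma d 1))) =
  cl d (fun i j => 6 * ((i == 1)%N && (j == 1)%N)%:Z - 2 * ((i == 2)%N && (j == 0)%N)%:Z).
Proof.
move=> hd; rewrite ssE //; apply/ffunP => -[i j]; rewrite !ffunE /=.
bcrush.
Qed.

Lemma zeroE d n1 G : (d <= n1)%N -> cmul (sigma d n1) G = cl d (fun _ _ => 0).
Proof.
move=> h; apply/ffunP => -[a b]; rewrite !ffunE /=.
apply: big1 => x _; apply: big1 => y _.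
rewrite !ffunE (_ : (x.1 : nat) == n1 = false) ?mul0r //.
by apply/negbTE; have := ltn_ord x.1; lia.
Qed.

Lemma zero_mul d G : cmul (cl d (fun _ _ => 0)) G = cl d (fun _ _ => 0).
Proof.
apply/ffunP => -[a b]; rewrite !ffunE /=.
by apply: big1 => x _; apply: big1 => y _; rewrite !ffunE !mul0r.
Qed.

Lemma cint0 d : cint (cl d (fun _ _ => 0)) = 0.
Proof. by rewrite /cint big1 // => x _; rewrite ffunE mul0r. Qed.

Lemma hlp1 (a b c e f : int) : (a * b - c * e) * f = b * (a * f) - e * (c * f).
Proof. ring. Qed.

Lemma hlp2 (g a b c : int) : g * (6 * a - 2 * c * b) = a * (6 * g) - b * (2 * c * g).
Proof. ring. Qed.

Lemma innerT d x1 x2 : (2 <= d)%N ->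
  \sum_(0 <= y1 < d) \sum_(0 <= y2 < d)
     ((6 * ((y1 == 1)%N && (y2 == 1)%N)%:Z - 2 * ((y1 == 2)%N && (y2 == 0)%N)%:Z)
        * lrc x1 x2 y1 y2 d.-1 d.-1)
  = 6 * ((x1 == d - 2)%N && (x2 == d - 2)%N)%:Z
    - 2 * (3 <= d)%N%:Z * ((x1 == d - 1)%N && (x2 == d - 3)%N)%:Z.
Proof.
move=> hd.
under eq_bigr => ? _ do under eq_bigr => ? _ do rewrite hlp1.
under eq_bigr => ? _ do rewrite sumrB.
rewrite sumrB !delta2.
rewrite /lrc -!mulrA -!bZ.
bcrush.
Qed.

Lemma cintT d g : (2 <= d)%N ->
  cint (cmul (cl d g) (cl d (fun i j => 6 * ((i == 1)%N && (j == 1)%N)%:Z - 2 * ((i == 2)%N && (j == 0)%N)%:Z)))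
  = 6 * g (d - 2)%N (d - 2)%N - 2 * (3 <= d)%N%:Z * g (d - 1)%N (d - 3)%N.
Proof.
move=> hd; rewrite cl_mul cint_cl; last lia.
under eq_bigr => ? _ do under eq_bigr => ? _ do rewrite innerT // hlp2.
under eq_bigr => ? _ do rewrite sumrB.
rewrite sumrB !delta2.
rewrite (_ : ((d - 2 < d)%N && (d - 2 < d)%N) = true); last lia.
rewrite (_ : ((d - 1 < d)%N && (d - 3 < d)%N) = true); last lia.
rewrite !mul1r; ring.
Qed.

Lemma collapse_pair d K (c : nat -> bool) (F : nat -> nat -> int) :
  \sum_(0 <= x1 < d) \sum_(0 <= x2 < d) (((x1 == (K - x2)%N) && c x2)%:Z * F x1 x2)
  = \sum_(0 <= x2 < d) (((K - x2 < d)%N && c x2)%:Z * F (K - x2)%N x2).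
Proof.
rewrite exchange_big; apply: eq_bigr => x2 _.
under eq_bigr => ? _ do rewrite bZ -mulrA.
by rewrite delta1 bZ mulrA.
Qed.

Lemma cl_mul_coll d K K' (c c' : nat -> bool) :
  cmul (cl d (fun a b => ((a == (K - b)%N) && c b)%:Z))
       (cl d (fun a b => ((a == (K' - b)%N) && c' b)%:Z)) =
  cl d (fun a b => \sum_(0 <= u < d) (((K - u < d)%N && c u)%:Z *
        \sum_(0 <= v < d) (((K' - v < d)%N && c' v)%:Z * lrc (K - u) u (K' - v) v a b))).
Proof.
rewrite cl_mul; apply/ffunP => -[a b]; rewrite !ffunE /= collapse_pair.
by apply: eq_bigr => u _; rewrite collapse_pair.
Qed.

Lemma cnt n lo c hi k :
  \sum_(0 <= v < n) ((lo <= v)%N && (v + c <= hi)%N && (v <= k)%N)%:Z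
  = (minn (minn (hi.+1 - c) k.+1) n - lo)%N%:Z.
Proof.
elim: n => [|n IH]; first by rewrite big_geq //; lia.
rewrite big_nat_recr // IH /=.
case: (boolP ((lo <= n)%N && (n + c <= hi)%N && (n <= k)%N)) => h /=; lia.
Qed.

Lemma pmm d n1 n2 n3 n4 u v : (2 <= d)%N -> (n4 <= n3)%N -> (n3 <= n2)%N -> (n2 <= n1)%N ->
  (n1 < d)%N -> (n1 + n2 + n3 + n4 = 2 * d - 4)%N ->
  ((n1 + n2 - u < d)%N && (u <= n2)%N)%:Z * (((n3 + n4 - v < d)%N && (v <= n4)%N)%:Z *
     lrc (n1 + n2 - u) u (n3 + n4 - v) v (d - 2) (d - 2))
  = (u == v + (n1 + n2 - (d - 2)))%N%:Z * ((v + (n1 + n2 - (d - 2)) <= n2)%N && (v <= n4)%N)%:Z.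
Proof.
move=> *; rewrite /lrc -!bZ; congr (Posz (nat_of_bool _)); apply/idP/idP => H; lia.
Qed.

Lemma Xmm d n1 n2 n3 n4 : (2 <= d)%N -> (n4 <= n3)%N -> (n3 <= n2)%N -> (n2 <= n1)%N ->
  (n1 < d)%N -> (n1 + n2 + n3 + n4 = 2 * d - 4)%N ->
  \sum_(0 <= u < d) (((n1 + n2 - u < d)%N && (u <= n2)%N)%:Z * \sum_(0 <= v < d)
     (((n3 + n4 - v < d)%N && (v <= n4)%N)%:Z * lrc (n1 + n2 - u) u (n3 + n4 - v) v (d - 2) (d - 2)))
  = (minn (minn (n2.+1 - (n1 + n2 - (d - 2))) n4.+1) d - 0)%N%:Z.
Proof.
move=> h1 h2 h3 h4 h5 h6.
under eq_bigr => u _ do rewrite big_distrr /=.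
rewrite exchange_big /=.
under eq_bigr => v _ do under eq_bigr => u _ do rewrite (pmm d n1 n2 n3 n4 u v h1 h2 h3 h4 h5 h6).
under eq_bigr => v _ do rewrite delta1 -bZ.
rewrite (eq_bigr (fun v => ((0 <= v)%N && (v + (n1 + n2 - (d - 2)) <= n2)%N && (v <= n4)%N)%:Z)); last first.
  by move=> v _; congr (Posz (nat_of_bool _)); apply/idP/idP => H; lia.
by rewrite cnt.
Qed.

Lemma L1eq d n1 n2 n3 n4 u v : (3 <= d)%N -> (n4 <= n3)%N -> (n3 <= n2)%N -> (n2 <= n1)%N ->
  (n1 < d)%N -> (n1 + n2 + n3 + n4 = 2 * d - 4)%N ->
  ((n1 + n2 - u < d)%N && (u <= n2)%N) && (((n3 + n4 - v < d)%N && (v <= n4)%N) &&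
    [&& (u <= n1 + n2 - u)%N, (v <= n3 + n4 - v)%N,
        (d - 1 + (d - 3) == n1 + n2 - u + u + (n3 + n4 - v + v))%N,
        (u + v <= d - 3)%N & (d - 3 - (u + v) <= minn (n1 + n2 - u - u) (n3 + n4 - v - v))%N])
  = [&& (u <= n2)%N, (v <= n4)%N, (v + (n1 + n2 - (d - 2)) <= u + 1)%N,
        (u <= v + (n1 + n2 - (d - 2)) + 1)%N & (u + v + 1 <= d - 2)%N].
Proof.
move=> *. (apply/idP/idP => H; lia).
Qed.

Lemma pm1 d n1 n2 n3 n4 (cr : nat) u v : (3 <= d)%N -> (n4 <= n3)%N -> (n3 <= n2)%N -> (n2 <= n1)%N ->
  (n1 < d)%N -> (n1 + n2 + n3 + n4 = 2 * d - 4)%N -> cr = ((n1 == n2) && (n3 == n4)) ->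
  ((n1 + n2 - u < d)%N && (u <= n2)%N)%:Z * (((n3 + n4 - v < d)%N && (v <= n4)%N)%:Z *
     lrc (n1 + n2 - u) u (n3 + n4 - v) v (d - 1) (d - 3))
  = (u == v + (n1 + n2 - (d - 2)) - 1)%N%:Z *
       ((1 - (n1 + n2 - (d - 2)) <= v)%N && (v + (n1 + n2 - (d - 2)) <= n2.+1)%N && (v <= n4)%N)%:Z
  + (u == v + (n1 + n2 - (d - 2)))%N%:Z *
       ((0 <= v)%N && (v + (n1 + n2 - (d - 2) + cr) <= n2)%N && (v <= n4)%N)%:Z
  + (u == v + (n1 + n2 - (d - 2)) + 1)%N%:Z *
       ((0 <= v)%N && (v + (n1 + n2 - (d - 2)).+1 <= n2)%N && (v <= n4)%N)%:Z.
Proof.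
move=> h1 h2 h3 h4 h5 h6 h7; rewrite /lrc -!bZ (L1eq d n1 n2 n3 n4 u v h1 h2 h3 h4 h5 h6).
(case: (boolP (u == v + (n1 + n2 - (d - 2)) - 1)%N) => ?;
case: (boolP (u == v + (n1 + n2 - (d - 2)))%N) => ?;
case: (boolP (u == v + (n1 + n2 - (d - 2)) + 1)%N) => ?; try (exfalso; lia);
rewrite /= ?mul0r ?mul1r ?add0r ?addr0; bcrush).
Qed.

Lemma Xm1 d n1 n2 n3 n4 (cr : nat) : (3 <= d)%N -> (n4 <= n3)%N -> (n3 <= n2)%N -> (n2 <= n1)%N ->
  (n1 < d)%N -> (n1 + n2 + n3 + n4 = 2 * d - 4)%N -> cr = ((n1 == n2) && (n3 == n4)) ->
  \sum_(0 <= u < d) (((n1 + n2 - u < d)%N && (u <= n2)%N)%:Z * \sum_(0 <= v < d)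
     (((n3 + n4 - v < d)%N && (v <= n4)%N)%:Z * lrc (n1 + n2 - u) u (n3 + n4 - v) v (d - 1) (d - 3)))
  = (minn (minn (n2.+2 - (n1 + n2 - (d - 2))) n4.+1) d - (1 - (n1 + n2 - (d - 2))))%N%:Z
  + (minn (minn (n2.+1 - (n1 + n2 - (d - 2) + cr)) n4.+1) d - 0)%N%:Z
  + (minn (minn (n2.+1 - (n1 + n2 - (d - 2)).+1) n4.+1) d - 0)%N%:Z.
Proof.
move=> h1 h2 h3 h4 h5 h6 h7.
under eq_bigr => u _ do rewrite big_distrr /=.
rewrite exchange_big /=.
under eq_bigr => v _ do under eq_bigr => u _ do rewrite (pm1 d n1 n2 n3 n4 cr u v h1 h2 h3 h4 h5 h6 h7).
under eq_bigr => v _ do rewrite !big_split /= !delta1 -!bZ.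
rewrite !big_split /=.
rewrite -!cnt.
congr (_ + _ + _); apply: eq_bigr => v _; congr (Posz (nat_of_bool _)); apply/idP/idP => H; lia.
Qed.

Lemma final d n1 n2 n3 n4 (cr : nat) : (3 <= d)%N -> (n4 <= n3)%N -> (n3 <= n2)%N -> (n2 <= n1)%N ->
  (n1 < d)%N -> (n1 + n2 + n3 + n4 = 2 * d - 4)%N -> cr = ((n1 == n2) && (n3 == n4)) ->
  6 * (minn (minn (n2.+1 - (n1 + n2 - (d - 2))) n4.+1) d - 0)%N%:Z -
  2 * 1 *
  ((minn (minn (n2.+2 - (n1 + n2 - (d - 2))) n4.+1) d -
    (1 - (n1 + n2 - (d - 2))))%N%:Z +
   (minn (minn (n2.+1 - (n1 + n2 - (d - 2) + cr)) n4.+1) d - 0)%N%:Z +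
   (minn (minn (n2.+1 - (n1 + n2 - (d - 2)).+1) n4.+1) d - 0)%N%:Z) =
  (if [&& n1 == n2, n2 == n3 & n3 == n4]
   then 6
   else
    if [&& n1 == n2, n2 != n3 & n3 == n4]
    then 4
    else
     if ((n1 + n4)%N == (n2 + n3)%N) && (n1 != n2)
     then 2
     else if n1 == (n2 + n3 + n4 + 2)%N then -2 else 0).
Proof.
move=> h1 h2 h3 h4 h5 h6 h7.
have hD : (d - 2 <= n1 + n2)%N by lia.
move eqD: (n1 + n2 - (d - 2))%N => D.
have [hA|[hB|[hC|[hE|hF]]]] : (n2.+1 < D)%N \/ D = n2.+1 \/ (D <= n2 /\ n2 - D < n4)%N
   \/ (D <= n2 /\ n2 - D = n4)%N \/ (D <= n2 /\ n4 < n2 - D)%N by lia.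
- have hc : (n2.+1 < D)%N by lia.
  set c0 := (minn (minn (n2.+1 - D) n4.+1) d - 0)%N.
  set c1 := (minn (minn (n2.+2 - D) n4.+1) d - (1 - D))%N.
  set c2 := (minn (minn (n2.+1 - (D + cr)) n4.+1) d - 0)%N.
  set c3 := (minn (minn (n2.+1 - D.+1) n4.+1) d - 0)%N.
  have -> : c0 = 0%N by rewrite /c0; clear -hc; lia.
  have -> : c1 = 0%N by rewrite /c1; clear -hc; lia.
  have -> : c2 = 0%N by rewrite /c2; clear -hc; lia.
  have -> : c3 = 0%N by rewrite /c3; clear -hc; lia.
  clear c0 c1 c2 c3.
  by (repeat case: ifPn => ?); lia.
- have hc : D = n2.+1 /\ (0 < d)%N by lia.
  set c0 := (minn (minn (n2.+1 - D) n4.+1) d - 0)%N.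
  set c1 := (minn (minn (n2.+2 - D) n4.+1) d - (1 - D))%N.
  set c2 := (minn (minn (n2.+1 - (D + cr)) n4.+1) d - 0)%N.
  set c3 := (minn (minn (n2.+1 - D.+1) n4.+1) d - 0)%N.
  have -> : c0 = 0%N by rewrite /c0; clear -hc; lia.
  have -> : c1 = 1%N by rewrite /c1; clear -hc; lia.
  have -> : c2 = 0%N by rewrite /c2; clear -hc; lia.
  have -> : c3 = 0%N by rewrite /c3; clear -hc; lia.
  clear c0 c1 c2 c3.
  by (repeat case: ifPn => ?); lia.
- have hc : ((D <= n2)%N /\ (n2 - D < n4)%N /\ (n4 < d)%N /\ cr = 0%N /\ (1 <= D)%N) by lia.
  set c0 := (minn (minn (n2.+1 - D) n4.+1) d - 0)%N.
  set c1 := (minn (minn (n2.+2 - D) n4.+1) d - (1 - D))%N.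
  set c2 := (minn (minn (n2.+1 - (D + cr)) n4.+1) d - 0)%N.
  set c3 := (minn (minn (n2.+1 - D.+1) n4.+1) d - 0)%N.
  have -> : c0 = (n2 - D).+1 by rewrite /c0; clear -hc; lia.
  have -> : c1 = (n2 - D).+2 by rewrite /c1; clear -hc; lia.
  have -> : c2 = (n2 - D).+1 by rewrite /c2; clear -hc; lia.
  have -> : c3 = (n2 - D)%N by rewrite /c3; clear -hc; lia.
  clear c0 c1 c2 c3.
  by (repeat case: ifPn => ?); lia.
- have hc : ((D <= n2)%N /\ (n2 - D = n4)%N /\ (n4 < d)%N /\ (cr <= 1)%N) by lia.
  set c0 := (minn (minn (n2.+1 - D) n4.+1) d - 0)%N.
  set c1 := (minn (minn (n2.+2 - D) n4.+1) d - (1 - D))%N.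
  set c2 := (minn (minn (n2.+1 - (D + cr)) n4.+1) d - 0)%N.
  set c3 := (minn (minn (n2.+1 - D.+1) n4.+1) d - 0)%N.
  have -> : c0 = n4.+1 by rewrite /c0; clear -hc; lia.
  have -> : c1 = (n4.+1 - (1 - D))%N by rewrite /c1; clear -hc; lia.
  have -> : c2 = (n4.+1 - cr)%N by rewrite /c2; clear -hc; lia.
  have -> : c3 = n4 by rewrite /c3; clear -hc; lia.
  clear c0 c1 c2 c3.
  by (repeat case: ifPn => ?); lia.
- have hc : ((D <= n2)%N /\ (n4 < n2 - D)%N /\ (n4 < d)%N /\ cr = 0%N /\ (1 <= D)%N) by lia.
  set c0 := (minn (minn (n2.+1 - D) n4.+1) d - 0)%N.
  set c1 := (minn (minn (n2.+2 - D) n4.+1) d - (1 - D))%N.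
  set c2 := (minn (minn (n2.+1 - (D + cr)) n4.+1) d - 0)%N.
  set c3 := (minn (minn (n2.+1 - D.+1) n4.+1) d - 0)%N.
  have -> : c0 = n4.+1 by rewrite /c0; clear -hc; lia.
  have -> : c1 = n4.+1 by rewrite /c1; clear -hc; lia.
  have -> : c2 = n4.+1 by rewrite /c2; clear -hc; lia.
  have -> : c3 = n4.+1 by rewrite /c3; clear -hc; lia.
  clear c0 c1 c2 c3.
  by (repeat case: ifPn => ?); lia.
Qed.

Theorem lemma4p12 (d n1 n2 n3 n4 : nat) :
  (2 <= d)%N ->
  (n4 <= n3)%N -> (n3 <= n2)%N -> (n2 <= n1)%N ->
  (n1 + n2 + n3 + n4 = 2 * d - 4)%N ->
  cint (cmul (cmul (cmul (sigma d n1) (sigma d n2)) (cmul (sigma d n3) (sigma d n4)))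
             (csub (cscale 8 (sigma2 d 1 1))
                   (cscale 2 (cmul (sigma d 1) (sigma d 1)))))
  = if [&& n1 == n2, n2 == n3 & n3 == n4] then 6
    else if [&& n1 == n2, n2 != n3 & n3 == n4] then 4
    else if (n1 + n4 == n2 + n3)%N && (n1 != n2) then 2
    else if n1 == (n2 + n3 + n4 + 2)%N then -2
    else 0.
Proof.
move=> hd h43 h32 h21 hs.
case: (ltnP n1 d) => h1; last first.
  rewrite zeroE // zero_mul zero_mul cint0.
  by (repeat case: ifPn => ?); lia.
have h3 : (n3 < d)%N by lia.
rewrite (ssE d n1 n2 h21 h1) (ssE d n3 n4 h43 h3) (TE d hd) cl_mul_coll (cintT _ _ hd).
rewrite (Xmm d n1 n2 n3 n4 hd h43 h32 h21 h1 hs).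
case: (boolP (3 <= d)%N) => h3d.
  rewrite (Xm1 d n1 n2 n3 n4 ((n1 == n2) && (n3 == n4)) h3d h43 h32 h21 h1 hs erefl).
  exact: (final d n1 n2 n3 n4 ((n1 == n2) && (n3 == n4)) h3d h43 h32 h21 h1 hs erefl).
rewrite mulr0 mul0r subr0.
have ed : d = 2%N by lia.
have e1 : n1 = 0%N by lia.
have e2 : n2 = 0%N by lia.
have e3 : n3 = 0%N by lia.
have e4 : n4 = 0%N by lia.
by subst.
Qed.
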